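(* For $m\ge1$ define polynomials by $p_1(x)=x$, $q_1(x)=1$, and for $m>1$, $p_m(x)=p_{m-1}(x)q_{m-1}(x)$ and $q_m(x)=q_{m-1}(x)^2-\frac{p_{m-1}(x)^2}{x}$. For $m\ge1$ let $A_m$ be the $m\times m$ coloring matrix with entries $a_{ij}=1$ if $i>j$ and $a_{ij}=0$ if $i\le j$. Then for every $m\ge1$, the generating function $F^{(m)}(x)=\sum_{n\ge1}t_{A_m}^{(m)}(n)x^n$ is rational, and $$F^{(m)}(x)=\frac{p_m(x)}{q_m(x)}.$$
   Context: A plane tree is an unlabeled rooted tree in which the children of every vertex are linearly ordered. A coloring matrix is an $m\times m$ matrix $A=(a_{ij})$ with entries in $\{0,1\}$. An $A$-coloring of a plane tree assigns to each vertex a color in $\{1,\dots,m\}$ such that whenever a vertex of color $j$ is a child of a vertex of color $i$, $a_{ij}=1$. Let $t_A^{(i)}(n)$ be the number of pairs (plane tree with $n$ vertices, $A$-coloring of it) in which the root has color $i$. *)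

(* Defs.v *)
From mathcomp Require Import all_boot all_order all_algebra.
Set Implicit Arguments. Unset Strict Implicit. Unset Printing Implicit Defensive.
Import GRing.Theory.
Local Open Scope ring_scope.

(* A plane tree together with a coloring of its vertices by colors of type T:
   each vertex carries its color, children are linearly ordered (a seq). *)
Inductive ctree (T : Type) : Type := CNode of T & seq (ctree T).

Definition root_color (T : Type) (t : ctree T) : T :=
  let: CNode c _ := t in c.

Fixpoint nverts (T : Type) (t : ctree T) : nat :=
  let: CNode _ cs := t in
  ((fix sz (cs : seq (ctree T)) : nat :=
      match cs with [::] => 0%N | u :: cs' => (nverts u + sz cs')%N end) cs).+1.

(* Colors 1..m are represented by 'I_m (color k <-> index k-1). *)
Fixpoint is_Acoloring (m : nat) (A : 'M[nat]_m) (t : ctree 'I_m) : bool :=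
  let: CNode i cs := t in
  (fix ok (cs : seq (ctree 'I_m)) : bool :=
     match cs with
     | [::] => true
     | u :: cs' => [&& A i (root_color u) == 1%N, is_Acoloring A u & ok cs']
     end) cs.

Definition has_card (T : Type) (P : T -> Prop) (k : nat) : Prop :=
  exists f : 'I_k -> T, injective f /\ (forall x, P x <-> exists i, f i = x).

Definition tA_is (m : nat) (A : 'M[nat]_m) (i : 'I_m) (n k : nat) : Prop :=
  has_card (fun t : ctree 'I_m =>
              [/\ is_Acoloring A t, root_color t = i & nverts t = n]) k.

Definition Amat (m : nat) : 'M[nat]_m :=
  \matrix_(i < m, j < m) (if (j < i)%N then 1%N else 0%N).

(* pq k = (p_{k+1}, q_{k+1}) *)
Fixpoint pq (k : nat) : {poly rat} * {poly rat} :=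
  match k with
  | 0%N => ('X, 1)
  | k'.+1 => let: (p, q) := pq k' in (p * q, q ^+ 2 - (p ^+ 2 %/ 'X))
  end.

Definition pm (m : nat) : {poly rat} := (pq m.-1).1.
Definition qm (m : nat) : {poly rat} := (pq m.-1).2.

(* Main.v *)
Require Import Defs.
From Stdlib Require List.
From HB Require Import structures.
From mathcomp Require Import all_boot all_order all_algebra zify ring.
Import GRing.Theory.
Unset Strict Implicit. Unset Printing Implicit Defensive.
Set Implicit Arguments.
Local Open Scope ring_scope.

Fixpoint ctree_ind2 (T : Type) (P : ctree T -> Prop)
  (H : forall c cs, List.Forall P cs -> P (CNode c cs)) (t : ctree T) : P t :=
  match t with CNode c cs => H c cs
    ((fix F cs := match cs return List.Forall P cs with
       | nil => List.Forall_nil _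
       | u :: cs' => List.Forall_cons _ (ctree_ind2 H u) (F cs') end) cs) end.

Fixpoint enc (m : nat) (t : ctree 'I_m.+1) : GenTree.tree nat :=
  let: CNode c cs := t in GenTree.Node c (map (@enc m) cs).
Fixpoint dec (m : nat) (t : GenTree.tree nat) : ctree 'I_m.+1 :=
  match t with
  | GenTree.Leaf _ => CNode ord0 [::]
  | GenTree.Node c ts => CNode (inord c) (map (@dec m) ts) end.
Lemma encK m : cancel (@enc m) (@dec m).
Proof.
elim/ctree_ind2 => c cs H /=; rewrite inord_val -map_comp; congr CNode.
by elim: H => //= u cs' Hu _ IH; rewrite Hu IH.
Qed.
HB.instance Definition _ (m : nat) := Equality.copy (ctree 'I_m.+1) (can_type (@encK m)).

Lemma nvertsE T c (cs : seq (ctree T)) : nverts (CNode c cs) = (sumn (map (@nverts T) cs)).+1.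
Proof. by elim: cs => //= u cs [->]. Qed.

Lemma AcolE m (A : 'M[nat]_m) i cs : is_Acoloring A (CNode i cs) =
  all (fun u => (A i (root_color u) == 1%N) && is_Acoloring A u) cs.
Proof. by elim: cs => //= u cs ->; rewrite andbA. Qed.

Lemma nverts_gt0 T (t : ctree T) : (0 < nverts t)%N.
Proof. by case: t => c cs; rewrite nvertsE. Qed.

Lemma AmatE M i j : (Amat M i j == 1%N) = (j < i)%N.
Proof. by rewrite mxE; case: ltnP. Qed.

Local Close Scope ring_scope.

Lemma uniq_flatten_map (S T : eqType) (A : S -> seq T) (s : seq S) :
  uniq s -> (forall x, x \in s -> uniq (A x)) ->
  (forall x y z, x \in s -> y \in s -> z \in A x -> z \in A y -> x = y) ->
  uniq (flatten [seq A x | x <- s]).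
Proof.
elim: s => //= x s IH /andP[xs us] uA dis.
rewrite cat_uniq uA ?mem_head //= IH //; last first.
- by move=> y z w ys zs; apply: dis; rewrite inE ?ys ?zs orbT.
- by move=> y ys; apply: uA; rewrite inE ys orbT.
rewrite andbT; apply/hasP => -[z /flatten_mapP [y ys zy] zx].
have exy : x = y by apply: (dis x y z); rewrite ?inE ?eqxx ?ys ?orbT.
by move: xs; rewrite exy ys.
Qed.

Definition Ok m (f : seq (ctree 'I_m.+1)) (k : 'I_m.+1) :=
  all (fun u : ctree 'I_m.+1 => (root_color u < k)%N && is_Acoloring (Amat m.+1) u) f.
Definition fsize m (f : seq (ctree 'I_m.+1)) := sumn (map (@nverts _) f).

Definition D m := (('I_m.+1 -> seq (ctree 'I_m.+1)) * ('I_m.+1 -> seq (seq (ctree 'I_m.+1))))%type.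

Definition Correct m (d : D m) a := forall k,
  [/\ uniq (d.1 k),
      forall t, (t \in d.1 k) = [&& is_Acoloring (Amat m.+1) t, root_color t == k & nverts t == a],
      uniq (d.2 k) &
      forall f, (f \in d.2 k) = Ok f k && (fsize f == a)].

Definition cand m (tr : nat -> 'I_m.+1 -> seq (ctree 'I_m.+1)) (n : nat) (k : 'I_m.+1) :=
  flatten [seq flatten [seq tr a i | i <- (filter (fun i : 'I_m.+1 => (i < k)%N) (enum 'I_m.+1))] | a <- iota 1 n.+1].

Definition step m (g : nat -> D m) (n : nat) : D m :=
  let tr' := fun k : 'I_m.+1 => [seq CNode k f | f <- (g n).2 k] in
  let tr := fun a i => if a == n.+1 then tr' i else (g a).1 i in
  (tr', fun k => flatten [seq [seq u :: f | f <- (g (n.+1 - nverts u)%N).2 k] | u <- cand tr n k]).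

Definition base m : D m := (fun _ => [::], fun _ => [:: [::]]).

Fixpoint G m n : nat -> D m := match n with
  | 0 => fun _ => base m
  | n'.+1 => fun a => if (a <= n')%N then G m n' a else step (G m n') n' end.

Lemma base_correct m : Correct (base m) 0.
Proof.
move=> k; split => //=.
  by move=> t; rewrite in_nil; case: t => c cs; rewrite nvertsE !andbF.
move=> f; rewrite inE; case: f => [|u f] //=; rewrite /fsize /=.
by case: u => c cs; rewrite nvertsE addSn !andbF.
Qed.

Lemma step_correct m g n : (forall b, (b <= n)%N -> Correct (g b) b) -> Correct (@step m g n) n.+1.
Proof.
move=> Hg.
set tr' := fun k : 'I_m.+1 => [seq CNode k f | f <- (g n).2 k].
set tr := fun a i => if a == n.+1 then tr' i else (g a).1 i.
have Htr' k : uniq (tr' k) /\ forall t, (t \in tr' k) =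
   [&& is_Acoloring (Amat m.+1) t, root_color t == k & nverts t == n.+1].
  have [_ _ uF mF] := Hg n (leqnn n) k.
  split; first by rewrite map_inj_uniq // => x y [].
  case=> c cs; rewrite AcolE nvertsE eqSS /=.
  apply/mapP/idP => [[f fF [-> ->]]|/and3P[H1 /eqP H2 H3]].
    move: fF; rewrite mF /Ok => /andP[Hf ->]; rewrite eqxx !andbT.
    apply: sub_all Hf => u /andP[a b]; by rewrite AmatE a b.
  exists cs => //; last by rewrite H2.
  rewrite mF /Ok /fsize H3 andbT; rewrite -H2; apply: sub_all H1 => u /andP[a b].
  by rewrite -AmatE a b.
have Htr a i : (a <= n.+1)%N -> uniq (tr a i) /\ forall t, (t \in tr a i) =
   [&& is_Acoloring (Amat m.+1) t, root_color t == i & nverts t == a].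
  rewrite /tr; case: eqP => [->|ne] Ha; first by apply: Htr'.
  have Hb : (a <= n)%N by rewrite -ltnS ltn_neqAle Ha andbT; apply/eqP.
  by have [? ? _ _] := Hg a Hb i; split.
have Hcand k u : (u \in cand tr n k) =
   [&& is_Acoloring (Amat m.+1) u, (root_color u < k)%N & (nverts u <= n.+1)%N].
  apply/flatten_mapP/idP => [[a] | /and3P[H1 H2 H3]].
    rewrite mem_iota add1n ltnS => /andP[a1 an] /flatten_mapP[i].
    rewrite mem_filter => /andP [ik _]; rewrite (Htr a i an).2 => /and3P[-> /eqP -> /eqP ->].
    by rewrite ik.
  exists (nverts u); first by rewrite mem_iota nverts_gt0 add1n ltnS.
  apply/flatten_mapP; exists (root_color u); first by rewrite mem_filter H2 mem_enum.
  by rewrite (Htr _ _ H3).2 H1 !eqxx.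
have Ucand k : uniq (cand tr n k).
  apply: uniq_flatten_map; first exact: iota_uniq.
  - move=> a; rewrite mem_iota add1n ltnS => /andP[_ an].
    apply: uniq_flatten_map; first by rewrite filter_uniq // enum_uniq.
    + by move=> i _; exact: (Htr a i an).1.
    move=> i j z _ _; rewrite !(Htr a _ an).2 => /and3P[_ /eqP <- _] /and3P[_ /eqP <- _].
    done.
  move=> a b z; rewrite !mem_iota !add1n !ltnS => /andP[_ an] /andP[_ bn].
  move=> /flatten_mapP[i _]; rewrite (Htr a i an).2 => /and3P[_ _ /eqP <-].
  by move=> /flatten_mapP[j _]; rewrite (Htr b j bn).2 => /and3P[_ _ /eqP <-].
move=> k; have [U1 M1] := Htr' k; split => //=.
  apply: uniq_flatten_map => // [u|u v z].
    rewrite Hcand => /and3P[_ _ un]; rewrite map_inj_uniq; last by move=> x y [].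
    have := nverts_gt0 u => u0.
    by have [_ _ ? _] := Hg (n.+1 - nverts u)%N ltac:(lia) k.
  by move=> _ _ /mapP[f _ ->] /mapP[f' _ []].
move=> f; apply/flatten_mapP/idP.
  move=> [u]; rewrite Hcand => /and3P[cu ru un] /mapP[f' f'F ->].
  have := nverts_gt0 u => u0.
  have [_ _ _ mF] := Hg (n.+1 - nverts u)%N ltac:(lia) k.
  move: f'F; rewrite mF /Ok /fsize /= => /andP[-> /eqP ->].
  by rewrite ru cu /=; apply/eqP; lia.
case: f => [|u f'] //.
rewrite /Ok /fsize /= => /andP[/andP[/andP[ru cu] okf] /eqP sz].
have := nverts_gt0 u => u0.
exists u; first by rewrite Hcand cu ru /=; lia.
apply/mapP; exists f' => //.
have [_ _ _ mF] := Hg (n.+1 - nverts u)%N ltac:(lia) k.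
rewrite mF /Ok okf /fsize /=; apply/eqP; lia.
Qed.

Lemma G_correct m n a : (a <= n)%N -> Correct (G m n a) a.
Proof.
elim: n a => [|n IH] a /=; first by rewrite leqn0 => /eqP ->; exact: base_correct.
case: ifP => [an _|an an1]; first exact: IH.
have -> : a = n.+1 by apply/eqP; rewrite eqn_leq an1 leqNgt ltnS an.
exact: step_correct.
Qed.

Lemma G_stable m n a : (a <= n)%N -> G m n a = G m a a.
Proof.
elim: n => [|n IH]; first by rewrite leqn0 => /eqP ->.
rewrite leq_eqVlt => /orP[/eqP ->//|]; rewrite ltnS => an /=; rewrite an; exact: IH.
Qed.


Unset Implicit Arguments.

Definition Tr m a (i : 'I_m.+1) := (G m a a).1 i.
Definition Fr m s (k : 'I_m.+1) := (G m s s).2 k.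
Definition tc m (i : 'I_m.+1) a := size (Tr m a i).
Definition fc m (k : 'I_m.+1) s := size (Fr m s k).

Lemma tc0 m i : tc m i 0 = 0.
Proof. by []. Qed.

Lemma tcS m i s : tc m i s.+1 = fc m i s.
Proof. by rewrite /tc /Tr /= ltnn /= size_map /fc /Fr. Qed.

Lemma fc0 m k : fc m k 0 = 1.
Proof. by []. Qed.

Lemma fcS m k s : fc m k s.+1 =
  \sum_(a < s.+2) (\sum_(j < m.+1 | (j < k)%N) tc m j a) * fc m k (s.+1 - a).
Proof.
rewrite [RHS](_ : _ = \sum_(a <- iota 1 s.+1) (\sum_(j < m.+1 | (j < k)%N) tc m j a) * fc m k (s.+1 - a)); last first.
  by rewrite -(big_mkord (fun _ => true) (fun a => (\sum_(j < m.+1 | (j < k)%N) tc m j a) * fc m k (s.+1 - a))) big_ltn // [X in X * _ + _]big1 // mul0n add0n.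
rewrite /fc /Fr /= ltnn /= size_flatten /shape -map_comp sumnE big_map /cand.
rewrite big_flatten big_map.
apply: eq_big_seq => a; rewrite mem_iota => /andP[a1 as2].
have trE i : (if a == s.+1 then [seq CNode i f | f <- (G m s s).2 i] else (G m s a).1 i)
   = Tr m a i.
  case: eqP => [->|ne]; first by rewrite /Tr /= ltnn.
  by rewrite /Tr G_stable //; lia.
rewrite (eq_map trE).
rewrite big_flatten /= big_map big_filter big_distrl /=.
rewrite big_enum_cond /=; apply: eq_bigr => i _.
rewrite (eq_big_seq (fun _ => fc m k (s.+1 - a))) => [|u].
  by rewrite big_const_seq count_predT iter_addn_0 mulnC.
have [_ mT _ _] := @G_correct m a a (leqnn a) i.
rewrite /Tr mT => /and3P[_ _ /eqP ->]; rewrite size_map /fc /Fr G_stable //; lia.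
Qed.

Lemma has_card_seq (T : eqType) (P : T -> Prop) (L : seq T) (x0 : T) :
  uniq L -> (forall x, P x <-> x \in L) -> has_card P (size L).
Proof.
move=> uL HP; exists (fun i : 'I_(size L) => nth x0 L i); split.
  by move=> i j /eqP; rewrite nth_uniq // => /eqP /val_inj.
move=> x; rewrite HP; split => [xL|[i <-]]; last exact: mem_nth.
have xi : (index x L < size L)%N by rewrite index_mem.
by exists (Ordinal xi); rewrite /= nth_index.
Qed.

Lemma tc_card m n : tA_is (Amat m.+1) ord_max n (tc m ord_max n).
Proof.
have [uT mT _ _] := @G_correct m n n (leqnn n) ord_max.
rewrite /tA_is /tc /Tr; eapply (@has_card_seq _ _ _ (CNode ord_max [::])); first exact: uT.
move=> t; rewrite mT.
by split => [[-> -> ->]|/and3P[-> /eqP -> /eqP ->]]; rewrite ?eqxx.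
Qed.

Set Implicit Arguments.
Local Open Scope ring_scope.

Definition eqm (N : nat) (a b : {poly rat}) := forall i, (i < N)%N -> a`_i = b`_i.

Lemma eqm_sym N a b : eqm N a b -> eqm N b a.
Proof. by move=> H i iN; rewrite H. Qed.
Lemma eqm_trans N a b c : eqm N a b -> eqm N b c -> eqm N a c.
Proof. by move=> H1 H2 i iN; rewrite H1 ?H2. Qed.
Lemma eqm_eq N a b : a = b -> eqm N a b.
Proof. by move=> ->. Qed.
Lemma eqm_le N N' a b : (N' <= N)%N -> eqm N a b -> eqm N' a b.
Proof. by move=> le H i iN; apply: H; apply: leq_trans le. Qed.
Lemma eqm_add N a b c d : eqm N a b -> eqm N c d -> eqm N (a + c) (b + d).
Proof. by move=> H1 H2 i iN; rewrite !coefD H1 ?H2. Qed.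
Lemma eqm_sub N a b c d : eqm N a b -> eqm N c d -> eqm N (a - c) (b - d).
Proof. by move=> H1 H2 i iN; rewrite !coefB H1 ?H2. Qed.
Lemma eqm_mull N a b c : eqm N a b -> eqm N (c * a) (c * b).
Proof.
move=> H i iN; rewrite !coefM; apply: eq_bigr => j _; rewrite H //.
by apply: leq_ltn_trans iN; apply: leq_subr.
Qed.
Lemma eqm_mulr N a b c : eqm N a b -> eqm N (a * c) (b * c).
Proof. by move=> H; rewrite ![_ * c]mulrC; apply: eqm_mull. Qed.
Lemma eqm_X N a b : eqm N.+1 ('X * a) ('X * b) -> eqm N a b.
Proof. by move=> H i iN; have := H i.+1 iN; rewrite !coefXM. Qed.

Definition TP m K (i : 'I_m.+1) : {poly rat} := \poly_(a < K) (tc m i a)%:R.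
Arguments TP : clear implicits.
Definition FP m K (k : 'I_m.+1) : {poly rat} := \poly_(a < K) (fc m k a)%:R.
Arguments FP : clear implicits.
Definition SP m K (k : 'I_m.+1) : {poly rat} := \sum_(j < m.+1 | (j < k)%N) TP m K j.
Arguments SP : clear implicits.

Lemma SP_coef m K k a : (a < K)%N -> (SP m K k)`_a = \sum_(j < m.+1 | (j < k)%N) (tc m j a)%:R.
Proof.
move=> aK; rewrite /SP coef_sum; apply: eq_bigr => j _; by rewrite coef_poly aK.
Qed.

Lemma factA m K i : eqm K (TP m K i) ('X * FP m K i).
Proof.
move=> a aK; rewrite coefXM coef_poly aK; case: a aK => [|s] sK //=.
by rewrite coef_poly tcS (ltnW sK).
Qed.

Lemma factB m K k : eqm K (FP m K k * (1 - SP m K k)) 1.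
Proof.
suff H : eqm K (FP m K k) (1 + SP m K k * FP m K k).
  apply: (@eqm_trans _ _ (FP m K k - SP m K k * FP m K k)); first by apply: eqm_eq; ring.
  apply: (@eqm_trans _ _ ((1 + SP m K k * FP m K k) - SP m K k * FP m K k)).
    exact: eqm_sub.
  by apply: eqm_eq; ring.
move=> a aK; rewrite coefD coef1 coefM coef_poly aK.
case: a aK => [|s] sK.
  rewrite big_ord1 SP_coef // big1 ?mul0r ?addr0 //.
rewrite /= add0r fcS natr_sum; apply: eq_bigr => a _.
rewrite natrM natr_sum SP_coef; last by apply: leq_ltn_trans sK; rewrite -ltnS.
rewrite coef_poly ifT //; apply: leq_ltn_trans sK; apply: leq_subr.
Qed.

Lemma pqS i : pq i.+1 = ((pq i).1 * (pq i).2, (pq i).2 ^+ 2 - (pq i).1 ^+ 2 %/ 'X).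
Proof. by rewrite /=; case: (pq i). Qed.

Lemma pqX i : exists R, (pq i).1 = 'X * R.
Proof.
elim: i => [|i [R HR]]; first by exists 1; rewrite mulr1.
by exists (R * (pq i).2); rewrite pqS /= HR mulrA.
Qed.

Lemma divX (R : {poly rat}) : ('X * R) ^+ 2 %/ 'X = 'X * R ^+ 2.
Proof.
rewrite (_ : ('X * R) ^+ 2 = 'X * ('X * R ^+ 2)); last by ring.
by rewrite mulKp // polyX_eq0.
Qed.

Lemma Q0 i : (pq i).2`_0 = 1.
Proof.
elim: i => [|i IH]; first by rewrite /= coef1.
have [R HR] := pqX i.
by rewrite pqS /= HR divX coefB coefXM coef0M IH mulr1 subr0.
Qed.

Lemma derive N (T P Q u F : {poly rat}) :
  eqm N.+1 (P * u) ('X * Q) -> eqm N.+1 T ('X * F) -> eqm N.+1 (F * u) 1 ->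
  eqm N (T * Q) P.
Proof.
move=> H1 H2 H3; apply: eqm_X.
apply: (@eqm_trans _ _ (T * ('X * Q))); first by apply: eqm_eq; ring.
apply: (@eqm_trans _ _ (T * (P * u))); first by apply: eqm_mull; apply: eqm_sym.
apply: (@eqm_trans _ _ (('X * F) * (P * u))); first exact: eqm_mulr.
apply: (@eqm_trans _ _ (('X * P) * (F * u))); first by apply: eqm_eq; ring.
apply: (@eqm_trans _ _ (('X * P) * 1)); first exact: eqm_mull.
by apply: eqm_eq; ring.
Qed.

Lemma stepq N (T P Q u R : {poly rat}) :
  eqm N.+1 (P * u) ('X * Q) -> eqm N (T * Q) P -> P = 'X * R ->
  eqm N ((P * Q) * (u - T)) ('X * (Q ^+ 2 - P ^+ 2 %/ 'X)).
Proof.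
move=> H1 H2 HR.
apply: (@eqm_trans _ _ (Q * (P * u) - P * (T * Q))); first by apply: eqm_eq; ring.
apply: (@eqm_trans _ _ (Q * ('X * Q) - P * P)).
  apply: eqm_sub; last exact: eqm_mull.
  by apply: eqm_mull; apply: (eqm_le (leqnSn N)).
by apply: eqm_eq; rewrite HR divX; ring.
Qed.

Lemma SP0 m K : SP m K (inord 0) = 0.
Proof. by rewrite /SP big_pred0 // => j; rewrite inordK. Qed.

Lemma SPS m K i : (i < m)%N ->
  SP m K (inord i.+1) = SP m K (inord i) + TP m K (inord i).
Proof.
move=> im; rewrite /SP (bigD1 (inord i)) /=; last by rewrite !inordK //; lia.
rewrite addrC; congr (_ + _); apply: eq_bigl => j.
rewrite !inordK; try lia.
rewrite -(inj_eq val_inj) /= inordK; last lia.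
by rewrite ltnS leq_eqVlt; case: ltngtP.
Qed.

Lemma mainq m K i : (i <= m)%N -> (i < K)%N ->
  eqm (K - i) ((pq i).1 * (1 - SP m K (inord i))) ('X * (pq i).2).
Proof.
elim: i => [|i IH] im iK.
  by rewrite SP0 /= subr0 mulr1; apply: eqm_eq.
have IH' := IH (ltnW im) (ltnW iK).
have [R HR] := pqX i.
rewrite pqS /= SPS // opprD addrA.
have e : (K - i = (K - i.+1).+1)%N by lia.
rewrite e in IH'.
apply: (stepq IH' _ HR).
apply: (derive (F := FP m K (inord i)) IH').
  by apply: (@eqm_le K); [lia | exact: factA].
by apply: (@eqm_le K); [lia | exact: factB].
Qed.

Unset Implicit Arguments.

Theorem theorem40 (m : nat) :
  exists c : nat -> nat,
    c 0%N = 0%N /\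
    (forall n : nat, (1 <= n)%N -> tA_is (Amat m.+1) ord_max n (c n)) /\
    (qm m.+1)`_0 != 0 /\
    (forall n : nat,
       \sum_(k < n.+1) (c k)%:R * (qm m.+1)`_(n - k) = (pm m.+1)`_n).
Proof.
exists (fun n => tc m ord_max n); split => //; split; first by move=> n _; exact: tc_card.
split; first by rewrite /qm /= Q0 oner_eq0.
move=> n; rewrite /qm /pm /=.
pose K := (n + m + 2)%N.
have H1 := @mainq m K m (leqnn m) ltac:(lia).
have e : (K - m = (K - m.+1).+1)%N by lia.
rewrite e in H1.
have HA : eqm (K - m.+1).+1 (TP m K (inord m)) ('X * FP m K (inord m)).
  by apply: (@eqm_le K); [lia | exact: factA].
have HB : eqm (K - m.+1).+1 (FP m K (inord m) * (1 - SP m K (inord m))) 1.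
  by apply: (@eqm_le K); [lia | exact: factB].
have H2 := derive H1 HA HB.
have eo : (inord m : 'I_m.+1) = ord_max by apply: val_inj; rewrite /= inordK.
rewrite eo in H2.
rewrite -(H2 n); last lia.
rewrite coefM; apply: eq_bigr => j _; rewrite coef_poly ifT //.
have := ltn_ord j; lia.
Qed.
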